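(* Let $(X,\mathscr{R})$ be a reaction network with stoichiometric matrix $S$, and let $A\in\mathbb{N}_0^{\mathcal{A}\times X}$ be an sf-instance. Consider the statements, for $x,y\in X$: (i) $x$ and $y$ are obligatory isomers; (ii) $A_{ax}=A_{ay}$ for all $a\in\mathcal{A}$. If $\operatorname{im}A^\top=\ker S^\top$, then (i) and (ii) are equivalent. If $\operatorname{im}A^\top\subseteq\ker S^\top$, then (i) implies (ii).
   Context: A reaction network (RN) $(X,\mathscr{R})$ consists of a finite non-empty set $X$ of species and a finite non-empty set $\mathscr{R}$ of reactions. Each reaction $r$ is given by stoichiometric coefficients $s^-_{xr},s^+_{xr}\in\mathbb{N}_0$. The stoichiometric matrix $S\in\mathbb{Z}^{X\times\mathscr{R}}$ has entries $S_{xr}=s^+_{xr}-s^-_{xr}$. The paper assumes throughout that RNs are closed: every reaction $r$ has $x,y$ with $S_{xr}<0<S_{yr}$. An sf-instance is a matrix $A\in\mathbb{N}_0^{\mathcal{A}\times X}$, for some non-empty finite set $\mathcal{A}$, with every column nonzero and $AS=0$. Distinct $x,y\in X$ are obligatory isomers if there is $v\in\mathbb{Z}^{\mathscr{R}}$ with: - $-[Sv]_x=[Sv]_y=k$ for some positive integer $k$; - $[Sv]_z=0$ for all $z\in X\setminus\{x,y\}$. *)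

(* Defs.v *)
From HB Require Import structures.
From mathcomp Require Import all_boot all_order all_algebra.
Set Implicit Arguments. Unset Strict Implicit. Unset Printing Implicit Defensive.
Import Order.TTheory GRing.Theory Num.Theory.
Local Open Scope ring_scope.

(* A reaction network (X, Reactions) is given by species X, reactions Rn
   (finite, non-empty types) and stoichiometric coefficients
   sminus x r = s^-_{xr}, splus x r = s^+_{xr} in N_0. *)

Definition stoich (X Rn : finType) (sminus splus : X -> Rn -> nat) :
  X -> Rn -> int :=
  fun x r => (splus x r)%:Z - (sminus x r)%:Z.

Definition closed_RN (X Rn : finType) (S : X -> Rn -> int) : Prop :=
  forall r : Rn, exists x y : X, S x r < 0 /\ 0 < S y r.

Definition Smul (X Rn : finType) (S : X -> Rn -> int) (v : Rn -> int) (x : X) : int :=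
  \sum_(r : Rn) S x r * v r.

Definition sf_instance (Atoms X Rn : finType) (S : X -> Rn -> int)
  (A : Atoms -> X -> nat) : Prop :=
  (forall x : X, exists a : Atoms, A a x != 0%N) /\
  (forall (a : Atoms) (r : Rn), \sum_(x : X) (A a x)%:Z * S x r = 0).

Definition obligatory_isomers (X Rn : finType) (S : X -> Rn -> int) (x y : X) : Prop :=
  x <> y /\
  exists (v : Rn -> int) (k : nat),
    (0 < k)%N /\
    - Smul S v x = k%:Z /\ Smul S v y = k%:Z /\
    (forall z : X, z <> x -> z <> y -> Smul S v z = 0).

Definition in_im_AT (R : realFieldType) (Atoms X : finType)
  (A : Atoms -> X -> nat) (u : X -> R) : Prop :=
  exists lam : Atoms -> R, forall x : X, u x = \sum_(a : Atoms) lam a * (A a x)%:R.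

Definition in_ker_ST (R : realFieldType) (X Rn : finType)
  (S : X -> Rn -> int) (u : X -> R) : Prop :=
  forall r : Rn, \sum_(x : X) u x * (S x r)%:~R = 0.

(* Main.v *)
Require Import Defs.
From HB Require Import structures.
From mathcomp Require Import all_boot all_order all_algebra.
Import Order.TTheory GRing.Theory Num.Theory.
Local Open Scope ring_scope.

Lemma sum_ev (R : nmodType) (I : finType) (F : I -> R) :
  \sum_(r : I) F r = \sum_(i < #|I|) F (enum_val i).
Proof. rewrite -(big_enum_val (A:=I)) /=. apply: eq_bigl => r. by rewrite inE. Qed.

Definition bvec (X : finType) (x y z : X) : rat :=
  if z == y then 1 else if z == x then -1 else 0.
Arguments bvec {X}.

Lemma fredholm (X Rn : finType) (S : X -> Rn -> int) (x y : X) :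
  (exists w : Rn -> rat, forall z, \sum_(r : Rn) (S z r)%:~R * w r = bvec x y z) \/
  (exists u : X -> rat, (forall r, \sum_(z : X) u z * (S z r)%:~R = 0) /\
     \sum_(z : X) bvec x y z * u z != 0).
Proof.
pose ST : 'M[rat]_(#|Rn|, #|X|) := \matrix_(i, j) (S (enum_val j) (enum_val i))%:~R.
pose b : 'rV[rat]_#|X| := \row_j bvec x y (enum_val j).
case: (boolP (b <= ST)%MS) => [/submxP [w hw] | hn].
  left; exists (fun r => w 0 (enum_rank r)) => z.
  have := congr1 (fun M : 'rV_ _ => M 0 (enum_rank z)) hw.
  rewrite /b !mxE enum_rankK => ->.
  idtac.
  rewrite [LHS]sum_ev /=.
  apply: eq_bigr => i _; rewrite /ST !mxE enum_rankK enum_valK mulrC.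
  done.
right.
rewrite submxE in hn.
have [j hj] : exists j, (b *m cokermx ST) 0 j != 0.
  apply/existsP; move: hn; apply: contraR; rewrite negb_exists => /forallP h.
  apply/eqP/matrixP => i k; rewrite ord1 [RHS]mxE; apply/eqP; exact/negPn/h.
exists (fun z => cokermx ST (enum_rank z) j); split.
  move=> r.
  have := congr1 (fun M : 'M_ _ => M (enum_rank r) j) (mulmx_coker ST).
  rewrite [X in X = _ -> _]mxE [X in _ = X -> _]mxE => E.
  rewrite [LHS]sum_ev; apply: etrans E.
  by apply: eq_bigr => i _; rewrite /ST !mxE enum_rankK enum_valK mulrC.
suff -> : \sum_z bvec x y z * cokermx ST (enum_rank z) j = (b *m cokermx ST) 0 j by [].
rewrite [RHS]mxE [LHS]sum_ev.
by apply: eq_bigr => i _; rewrite /b !mxE enum_valK.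
Qed.
Lemma integerize (X Rn : finType) (S : X -> Rn -> int) (x y : X) (hxy : x <> y)
  (w : Rn -> rat) (hw : forall z, \sum_(r : Rn) (S z r)%:~R * w r = bvec x y z) :
  obligatory_isomers S x y.
Proof.
pose d : int := \prod_(r : Rn) denq (w r).
have d0 : 0 < d by apply: prodr_gt0 => r _; exact: denq_gt0.
pose v r := numq (w r) * \prod_(r' | r' != r) denq (w r').
have hv r : (v r)%:~R = w r * d%:~R :> rat.
  rewrite /v /d [in RHS](bigD1 r) //= !intrM numqE mulrA.
  done.
have hS z : (Smul S v z)%:~R = bvec x y z * d%:~R :> rat.
  rewrite /Smul -hw mulr_suml rmorph_sum; apply: eq_bigr => r _.
  by rewrite rmorphM /= hv mulrA.
split => //; exists v, `|d|%N; split; first by rewrite -ltz_nat gtz0_abs.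
rewrite gtz0_abs //; split; last split.
- suff -> : Smul S v x = - d by rewrite opprK.
  apply: (@intr_inj rat); rewrite hS /bvec.
  have -> : (x == y) = false by apply/eqP.
  by rewrite eqxx mulN1r intrN.
- by apply: (@intr_inj rat); rewrite hS /bvec eqxx mul1r.
- move=> z hzx hzy; apply: (@intr_inj rat); rewrite hS /bvec.
  have -> : (z == y) = false by apply/eqP.
  have -> : (z == x) = false by apply/eqP.
  by rewrite mul0r.
Qed.
Lemma forward (X Rn Atoms : finType) (S : X -> Rn -> int) (A : Atoms -> X -> nat)
  (hAS : forall a r, \sum_(x : X) (A a x)%:Z * S x r = 0) x y :
  obligatory_isomers S x y -> forall a, A a x = A a y.
Proof.
move=> [hxy [v [k [k0 [hx [hy hz]]]]]] a.
have E : \sum_(z : X) (A a z)%:Z * Smul S v z = 0.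
  rewrite /Smul.
  under eq_bigr => z _ do rewrite mulr_sumr.
  rewrite exchange_big /= big1 // => r _.
  under eq_bigr => z _ do rewrite mulrA.
  by rewrite -mulr_suml hAS mul0r.
rewrite (bigD1 x) //= (bigD1 y) /= in E; last by apply/eqP => /esym.
rewrite big1 ?addr0 in E; last first.
  by move=> z /andP [/eqP h1 /eqP h2]; rewrite hz // mulr0.
move: E; rewrite hy -[Smul S v x]opprK hx mulrN => /eqP.
rewrite addrC subr_eq0 => /eqP /(mulIf _).
have kn0 : (k%:Z != 0) by rewrite eqz_nat -lt0n.
by move=> /(_ kn0) /eqP; rewrite eqz_nat => /eqP.
Qed.

Theorem theorem7 (R : realFieldType) (X Rn Atoms : finType)
  (sminus splus : X -> Rn -> nat) (A : Atoms -> X -> nat) :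
  (0 < #|X|)%N -> (0 < #|Rn|)%N -> (0 < #|Atoms|)%N ->
  closed_RN (stoich sminus splus) ->
  sf_instance (stoich sminus splus) A ->
  forall x y : X, x <> y ->
    ((forall u : X -> R, in_im_AT A u <-> in_ker_ST (stoich sminus splus) u) ->
       (obligatory_isomers (stoich sminus splus) x y <-> forall a : Atoms, A a x = A a y))
    /\
    ((forall u : X -> R, in_im_AT A u -> in_ker_ST (stoich sminus splus) u) ->
       (obligatory_isomers (stoich sminus splus) x y -> forall a : Atoms, A a x = A a y)).
Proof.
move=> _ _ _ _ [_ hAS] x y hxy.
split; last by move=> _; exact: forward.
move=> H; split; first exact: forward.
move=> hA.
set S := stoich sminus splus.
have [[w hw] | [u [hu hb]]] := @fredholm X Rn S x y; first exact: integerize hw.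
exfalso; move: hb.
have hyx : (y == x) = false by apply/eqP => /esym.
have -> : \sum_z bvec x y z * u z = u y - u x.
  rewrite (bigD1 y) //= (bigD1 x) /=; last by apply/eqP.
  rewrite big1 ?addr0; last first.
    move=> z /andP [h1 h2]; rewrite /bvec (negbTE h1) (negbTE h2) mul0r //.
  have hxy' : (x == y) = false by apply/eqP.
  by rewrite /bvec eqxx hxy' eqxx mul1r mulN1r.
rewrite subr_eq0 => /eqP; apply.
pose uR : X -> R := fun z => ratr (u z).
have hk : in_ker_ST S uR.
  move=> r; rewrite /uR.
  have -> : \sum_z ratr (u z) * (S z r)%:~R = ratr (\sum_z u z * (S z r)%:~R) :> R.
    rewrite rmorph_sum; apply: eq_bigr => z _.
    by rewrite rmorphM /= ratr_int.
  by rewrite hu rmorph0.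
have [lam hlam] := (proj2 (H uR)) hk.
have E : uR y = uR x.
  by rewrite hlam hlam; apply: eq_bigr => a _; rewrite hA.
move: E; rewrite /uR => E.
by apply/le_anti; rewrite -!(ler_rat R) E lexx.
Qed.
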